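(* Let $r\ge1$ be an integer and, for integers $m\ge0$, let $S_{r,m}=\sum_{k=0}^{m}J_{rk}^{(3)}$. Define the $4\times4$ matrices $$A_{r}=\begin{pmatrix} 1&0&0&0\\ 1&2^{r}+\epsilon_{r}&-(2^{r}\epsilon_{r}+1)&2^{r}\\0&1&0&0\\ 0&0&1&0 \end{pmatrix},\quad Q_{r,n}=\begin{pmatrix} J_{r}^{(3)}+2^{r}J_{-r}^{(3)}&0&0&0\\ S_{r,n}&J_{r(n+1)}^{(3)}&K_{r,n}^{(3)}&2^{r}J_{rn}^{(3)}\\S_{r,n-1}&J_{rn}^{(3)}&K_{r,n-1}^{(3)}&2^{r}J_{r(n-1)}^{(3)}\\ S_{r,n-2}&J_{r(n-1)}^{(3)}&K_{r,n-2}^{(3)}&2^{r}J_{r(n-2)}^{(3)} \end{pmatrix},$$ where $K_{r,m}^{(3)}=-(2^{r}\epsilon_{r}+1)J_{rm}^{(3)}+2^{r}J_{r(m-1)}^{(3)}$. Then for every integer $n\ge2$, $$J_{r}^{(3)}A_{r}^{n}+2^{r}J_{-r}^{(3)}A_{r}^{n-1}=Q_{r,n}.$$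
   Context: The third order Jacobsthal numbers are defined by $J_0^{(3)}=0$, $J_1^{(3)}=J_2^{(3)}=1$ and $J_{n+3}^{(3)}=J_{n+2}^{(3)}+J_{n+1}^{(3)}+2J_n^{(3)}$ for $n\ge0$, and are extended to all negative indices by running the recurrence backwards, i.e. $J_{n}^{(3)}=\tfrac12\big(J_{n+3}^{(3)}-J_{n+2}^{(3)}-J_{n+1}^{(3)}\big)$ for all $n<0$ (so $J_{-1}^{(3)}=0$, $J_{-2}^{(3)}=\tfrac12$, $J_{-3}^{(3)}=-\tfrac14$). Let $\omega_1=\frac{-1+\sqrt{-3}}{2}$, $\omega_2=\frac{-1-\sqrt{-3}}{2}$ be the roots of $x^2+x+1=0$ and $\epsilon_r=\omega_1^r+\omega_2^r$ (equal to $2$ if $3\mid r$, and $-1$ otherwise). *)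

(* Defs.v *)
From HB Require Import structures.
From mathcomp Require Import all_boot all_order all_algebra.
Set Implicit Arguments. Unset Strict Implicit. Unset Printing Implicit Defensive.
Import Order.TTheory GRing.Theory Num.Theory.
Local Open Scope ring_scope.

(* Forward triples (J_n, J_{n+1}, J_{n+2}) for n >= 0. *)
Fixpoint Jfwd (n : nat) : rat * rat * rat :=
  match n with
  | O => (0, 1, 1)
  | S n' => let: (a, b, c) := Jfwd n' in (b, c, c + b + 2 * a)
  end.

(* Backward triples (J_{-k}, J_{-k+1}, J_{-k+2}) for k >= 0, using
   J_n = (J_{n+3} - J_{n+2} - J_{n+1}) / 2. *)
Fixpoint Jbwd (k : nat) : rat * rat * rat :=
  match k with
  | O => (0, 1, 1)
  | S k' => let: (a, b, c) := Jbwd k' in ((c - b - a) / 2, a, b)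
  end.

Definition J (z : int) : rat :=
  match z with
  | Posz n => (Jfwd n).1.1
  | Negz k => (Jbwd k.+1).1.1   (* Negz k = -(k+1) *)
  end.

(* epsilon_r = omega_1^r + omega_2^r = 2 if 3 | r, -1 otherwise *)
Definition eps (r : nat) : rat := if (3 %| r)%N then 2 else -1.

Definition Ssum (r m : nat) : rat := \sum_(0 <= k < m.+1) J (r * k)%N.

Definition K (r : nat) (m : int) : rat :=
  - (2 ^+ r * eps r + 1) * J (r%:Z * m) + 2 ^+ r * J (r%:Z * (m - 1)).

Definition mx4 (rows : seq (seq rat)) : 'M[rat]_4 :=
  \matrix_(i < 4, j < 4) nth 0 (nth [::] rows i) j.

Definition A (r : nat) : 'M[rat]_4 :=
  mx4 [:: [:: 1; 0; 0; 0];
          [:: 1; 2 ^+ r + eps r; - (2 ^+ r * eps r + 1); 2 ^+ r];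
          [:: 0; 1; 0; 0];
          [:: 0; 0; 1; 0]].

Definition Q (r n : nat) : 'M[rat]_4 :=
  let R : int := r%:Z in
  let N : int := n%:Z in
  mx4 [:: [:: J R + 2 ^+ r * J (- R); 0; 0; 0];
          [:: Ssum r n; J (R * (N + 1)); K r N; 2 ^+ r * J (R * N)];
          [:: Ssum r (n - 1)%N; J (R * N); K r (N - 1); 2 ^+ r * J (R * (N - 1))];
          [:: Ssum r (n - 2)%N; J (R * (N - 1)); K r (N - 2); 2 ^+ r * J (R * (N - 2))]].

Example J_check : [:: J 0; J 1; J 2; J 3; J 4; J (-1); J (-2); J (-3)]
  = [:: 0; 1; 1; 2; 5; 0; 1/2; -1/4].
Proof. by []. Qed.

(* Main.v *)
Require Import Defs.
From HB Require Import structures.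
From mathcomp Require Import all_boot all_order all_algebra.
From mathcomp Require Import ring lra zify.
Import GRing.Theory Num.Theory.
Local Open Scope ring_scope.

Definition V (z : int) : rat :=
  if (z %% 3)%Z == 0 then 2 else if (z %% 3)%Z == 1 then -3 else 1.

Definition f (z : int) : rat := (2 * (2:rat) ^ z - V z) / 7.

Lemma Vshift (q c : int) : V (q * 3 + c) = V c.
Proof. by rewrite /V modzMDl. Qed.

Lemma mod3 (z : int) : exists q c, z = q * 3 + c /\ (c = 0 \/ c = 1 \/ c = 2).
Proof.
exists (z %/ 3)%Z, (z %% 3)%Z; split; first exact: divz_eq.
have h0 := @modz_ge0 z 3 isT. have h1 := @ltz_pmod z 3 isT. lia.
Qed.

Lemma pow2D (z : int) (k : nat) : (2:rat) ^ (z + k%:Z) = 2 ^ z * 2 ^+ k.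
Proof. by rewrite expfzDr. Qed.

Lemma frec (z : int) : f (z + 3%:Z) = f (z + 2%:Z) + f (z + 1%:Z) + 2 * f z.
Proof.
rewrite /f !pow2D.
have [q [c [-> hc]]] := mod3 z.
rewrite -!addrA !Vshift.
case: hc => [->|[->|->]]; rewrite /V /=. all: try field; done.
Qed.

Lemma Jfwd_f (n : nat) : Jfwd n = (f n, f (n + 1)%:Z, f (n+2)%:Z).
Proof.
elim: n => [|n IH]; first by rewrite /f /V /=; congr (_,_,_); field.
rewrite /= IH; congr (_,_,_).
- by rewrite addn1.
- by rewrite addn2 addn1.
- have := frec n%:Z.
  have -> : n%:Z + 3%:Z = (n.+1 + 2)%N%:Z by lia.
  have -> : n%:Z + 2%:Z = (n + 2)%N%:Z by lia.
  have -> : n%:Z + 1%:Z = (n + 1)%N%:Z by lia.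
  move=> ->; ring.
Qed.

Lemma Jbwd_f (k : nat) : Jbwd k = (f (- k%:Z), f (- k%:Z + 1), f (- k%:Z + 2%:Z)).
Proof.
elim: k => [|k IH]; first by rewrite /f /V /=; congr (_,_,_); field.
rewrite /= IH; congr (_,_,_).
- have := frec (- k.+1%:Z).
  have -> : - k.+1%:Z + 3%:Z = - k%:Z + 2%:Z by lia.
  have -> : - k.+1%:Z + 2%:Z = - k%:Z + 1 by lia.
  have -> : - k.+1%:Z + 1%:Z = - k%:Z by lia.
  move=> ->; field; done.
- by f_equal; lia.
- by f_equal; lia.
Qed.

Lemma JE (z : int) : J z = f z.
Proof.
case: z => [n|k]; rewrite /J; first by rewrite Jfwd_f.
by rewrite Jbwd_f NegzE.
Qed.

Lemma urec (r : nat) (k : int) :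
  J (r%:Z * (k + 3%:Z)) = (2 ^+ r + eps r) * J (r%:Z * (k + 2%:Z))
     - (2 ^+ r * eps r + 1) * J (r%:Z * (k + 1%:Z)) + 2 ^+ r * J (r%:Z * k).
Proof.
rewrite !JE /f.
have hp (i : nat) : (2:rat) ^ (r%:Z * (k + i%:Z)) = 2 ^ (r%:Z * k) * (2 ^+ r) ^+ i.
  by rewrite mulrDr -PoszM pow2D exprM.
rewrite !hp.
have [t [c [hk hc]]] := mod3 (r%:Z * k).
have hr := divn_eq r 3. have hs := ltn_pmod r (isT : (0 < 3)%N).
set q := (r %/ 3)%N in hr. set s := (r %% 3)%N in hr hs.
have hv (i : nat) : V (r%:Z * (k + i%:Z)) = V (c + (s * i)%N%:Z).
  rewrite (_ : r%:Z * (k + i%:Z) = (t + (q * i)%N%:Z) * 3 + (c + (s * i)%N%:Z)).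
    by rewrite Vshift.
  rewrite mulrDr hk; lia.
have hv0 : V (r%:Z * k) = V c by rewrite hk Vshift.
rewrite !hv hv0.
have he : eps r = if s == 0%N then 2 else -1 by [].
rewrite he.
set P := (2:rat) ^ (r%:Z * k).
set x := (2:rat) ^+ r.
case: s hs {hr he hv} => [|[|[|s]]] // _;
case: hc => [->|[->|->]]; rewrite /V /=; field; done.
Qed.

Arguments J : simpl never.
Arguments Ssum : simpl never.
Arguments K : simpl never.

Lemma u0 r : J (r%:Z * 0) = 0. Proof. by rewrite mulr0. Qed.
Lemma u1 r : J (r%:Z * 1) = J r%:Z. Proof. by rewrite mulr1. Qed.
Lemma um1 r : J (r%:Z * -1) = J (- r%:Z). Proof. by rewrite mulrN1. Qed.
Lemma u2 r : J (r%:Z * 2) = (2 ^+ r + eps r) * J r%:Z + 2 ^+ r * J (- r%:Z).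
Proof.
have := urec r (-1).
rewrite -[(-1 : int) + 3%:Z]/(2:int) -[(-1 : int) + 2%:Z]/(1:int) -[(-1 : int) + 1%:Z]/(0:int).
rewrite u0 u1 um1 => ->; ring.
Qed.
Lemma um2 r : 2 ^+ r * J (r%:Z * -2) = J r%:Z + (2 ^+ r * eps r + 1) * J (- r%:Z).
Proof.
have := urec r (-2).
rewrite -[(-2 : int) + 3%:Z]/(1:int) -[(-2 : int) + 2%:Z]/(0:int) -[(-2 : int) + 1%:Z]/(-1:int).
rewrite u0 u1 um1 => ->; ring.
Qed.

Lemma SsumS r m : Ssum r m.+1 = Ssum r m + J (r%:Z * m.+1%:Z).
Proof. by rewrite /Ssum big_nat_recr. Qed.
Lemma Ssum0 r : Ssum r 0 = 0.
Proof. by rewrite /Ssum big_nat1 muln0. Qed.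

Lemma base (r : nat) : J r%:Z *: A r + (2 ^+ r * J (- r%:Z)) *: 1 = Q r 1.
Proof.
apply/matrixP => i j; rewrite !mxE.
case: i => [[|[|[|[|i]]]] Hi] //; case: j => [[|[|[|[|j]]]] Hj] //=.
all: rewrite /K -?[(1-1)%N]/0%N -?[(1-2)%N]/0%N ?SsumS ?Ssum0.
all: rewrite -?[(1:int) - 1]/(0:int) -?[(1:int) - 1 - 1]/(-1:int) -?[(1:int) - 2]/(-1:int)
      -?[(1:int) - 2 - 1]/(-2:int) -?[(1:int) + 1]/(2:int) -?[(r * 0)%N%:Z]/(r%:Z * 0)
      -?[(r * 1)%N%:Z]/(r%:Z * 1).
all: rewrite ?u0 ?u1 ?um1 ?u2.
all: rewrite ?um2; ring.
Qed.

Lemma SsumP r m : Ssum r m = Ssum r m.-1 + J (r%:Z * m%:Z).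
Proof. case: m => [|m]; first by rewrite Ssum0 mulr0 addr0. by rewrite SsumS. Qed.

Lemma urecA r (k a b c : int) : a = k + 3%:Z -> b = k + 2%:Z -> c = k + 1%:Z ->
  J (r%:Z * a) = (2 ^+ r + eps r) * J (r%:Z * b)
     - (2 ^+ r * eps r + 1) * J (r%:Z * c) + 2 ^+ r * J (r%:Z * k).
Proof. by move=> -> -> ->; apply: urec. Qed.

Ltac nz E F := try (rewrite (_ : E = F); last by lia).

Lemma step (r m : nat) : Q r m.+1 * A r = Q r m.+2.
Proof.
apply/matrixP => i j; rewrite -mulmxE !mxE !big_ord_recr big_ord0 /= !mxE.
case: i => [[|[|[|[|i]]]] Hi] //; case: j => [[|[|[|[|j]]]] Hj] //=.
all: rewrite /K ?subSS ?subn0 ?subn1 ?(SsumS r m.+1) ?(SsumS r m) ?(SsumP r m).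
all: nz (m.+1%:Z - 1 - 1) (Posz m - 1); nz (m.+1%:Z - 2 - 1) (Posz m - 2%:Z);
     nz (m.+2%:Z - 1 - 1) (Posz m); nz (m.+2%:Z - 2 - 1) (Posz m - 1);
     nz (m.+1%:Z + 1) (Posz m + 2%:Z); nz (m.+1%:Z - 1) (Posz m); nz (m.+1%:Z - 2) (Posz m - 1);
     nz (m.+2%:Z + 1) (Posz m + 3%:Z); nz (m.+2%:Z - 1) (Posz m + 1%:Z); nz (m.+2%:Z - 2) (Posz m);
     nz (m.+1%:Z) (Posz m + 1%:Z); nz (m.+2%:Z) (Posz m + 2%:Z).
all: try rewrite (@urecA r (Posz m) (Posz m + 3%:Z) (Posz m + 2%:Z) (Posz m + 1%:Z)) //.
all: try rewrite (@urecA r (Posz m - 1) (Posz m + 2%:Z) (Posz m + 1%:Z) (Posz m)); try lia.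
all: try rewrite (@urecA r (Posz m - 2%:Z) (Posz m + 1%:Z) (Posz m) (Posz m - 1)); try lia.
all: ring.
Qed.

Theorem theorem1 (r n : nat) (hr : (1 <= r)%N) (hn : (2 <= n)%N) :
  J r%:Z *: A r ^+ n + (2 ^+ r * J (- r%:Z)) *: A r ^+ n.-1 = Q r n.
Proof.
case: n hn => [//|n] _.
elim: n => [|n IH]; first by rewrite expr1 expr0 base.
rewrite -step -IH /= exprSr.
case: n {IH} => [|n] /=; first by rewrite expr0 mulrDl -!scalerAl mul1r.
by rewrite exprSr mulrDl -!scalerAl.
Qed.
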